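(* Let $K_{3,3}$ be the complete bipartite graph with parts $\{1,2,3\}$ and $\{4,5,6\}$, and regard its automorphism group as the subgroup $${\mathrm{Aut}}(K_{3,3})=\langle (12),(123),(45),(456),(14)(25)(36)\rangle\subset S_6,$$ which is isomorphic to $(D_3\times D_3)\rtimes\mathbb{Z}_2$. Up to isomorphism, the subgroups of ${\mathrm{Aut}}(K_{3,3})$ are exactly: $(D_3\times D_3)\rtimes\mathbb{Z}_2$, $D_3\times D_3$, $(\mathbb{Z}_3\times\mathbb{Z}_3)\rtimes\mathbb{Z}_4$, $(\mathbb{Z}_3\times\mathbb{Z}_3)\rtimes\mathbb{Z}_2$, $D_3\times\mathbb{Z}_3$, $D_6$, $\mathbb{Z}_3\times\mathbb{Z}_3$, $D_4$, $D_3$, $\mathbb{Z}_6$, $D_2$, $\mathbb{Z}_4$, $\mathbb{Z}_3$, $\mathbb{Z}_2$, and the trivial group.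
   Context: $D_n$ denotes the dihedral group of order $2n$ (so $D_3\cong S_3$ and $D_2\cong\mathbb{Z}_2\times\mathbb{Z}_2$), and $\mathbb{Z}_n$ the cyclic group of order $n$. $(D_3\times D_3)\rtimes\mathbb{Z}_2$ is the semidirect product in which the generator of $\mathbb{Z}_2$ acts by swapping the two factors (the wreath product $S_3\wr\mathbb{Z}_2$). $(\mathbb{Z}_3\times\mathbb{Z}_3)\rtimes\mathbb{Z}_2$ is the semidirect product in which the generator of $\mathbb{Z}_2$ acts by inversion $g\mapsto g^{-1}$. $(\mathbb{Z}_3\times\mathbb{Z}_3)\rtimes\mathbb{Z}_4$ is the semidirect product in which a generator of $\mathbb{Z}_4$ acts on $\mathbb{Z}_3\times\mathbb{Z}_3$ by an automorphism of order $4$ (whose square is inversion); e.g. the subgroup of ${\mathrm{Aut}}(K_{3,3})$ generated by $(123),(456),(1425)(36)$. *)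

(* Defs.v *)
From mathcomp Require Import all_boot all_fingroup.
From Stdlib Require List.
Set Implicit Arguments. Unset Strict Implicit. Unset Printing Implicit Defensive.
Local Open Scope group_scope.

(* Vertices 1..6 of K_{3,3} are encoded as the ordinals 0..5 of 'I_6
   (vertex k is  inord (k-1)).  Parts {1,2,3} and {4,5,6}. *)
Definition v (k : nat) : 'I_6 := inord k.-1.

(* Permutations composed left to right ((s * t) x = t (s x)), MathComp style. *)
Definition t12 : {perm 'I_6} := tperm (v 1) (v 2).
Definition c123 : {perm 'I_6} := tperm (v 2) (v 3) * tperm (v 1) (v 2).
Definition t45 : {perm 'I_6} := tperm (v 4) (v 5).
Definition c456 : {perm 'I_6} := tperm (v 5) (v 6) * tperm (v 4) (v 5).
Definition swap : {perm 'I_6} :=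
  tperm (v 1) (v 4) * tperm (v 2) (v 5) * tperm (v 3) (v 6).

Definition AutK33 : {set {perm 'I_6}} := <<[set t12; c123; t45; c456; swap]>>.

(* The fifteen isomorphism types, given by standard presentations
   (all of these presented groups are finite). D_n has order 2n. *)

Definition isWreathD3 (gT : finGroupType) (G : {set gT}) : Prop :=
  G \isog Grp (a : s : b : u : t :
     (a ^+ 3, s ^+ 2, (a * s) ^+ 2, b ^+ 3, u ^+ 2, (b * u) ^+ 2,
      [~ a, b], [~ a, u], [~ s, b], [~ s, u],
      t ^+ 2, a ^ t = b, s ^ t = u, b ^ t = a, u ^ t = s)).

Definition isD3xD3 (gT : finGroupType) (G : {set gT}) : Prop :=
  G \isog Grp (a : s : b : u :
     (a ^+ 3, s ^+ 2, (a * s) ^+ 2, b ^+ 3, u ^+ 2, (b * u) ^+ 2,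
      [~ a, b], [~ a, u], [~ s, b], [~ s, u])).

Definition isZ3Z3sdZ4 (gT : finGroupType) (G : {set gT}) : Prop :=
  G \isog Grp (a : b : t :
     (a ^+ 3, b ^+ 3, [~ a, b], t ^+ 4, a ^ t = b, b ^ t = a ^-1)).

Definition isZ3Z3sdZ2 (gT : finGroupType) (G : {set gT}) : Prop :=
  G \isog Grp (a : b : t :
     (a ^+ 3, b ^+ 3, [~ a, b], t ^+ 2, a ^ t = a ^-1, b ^ t = b ^-1)).

Definition isD3xZ3 (gT : finGroupType) (G : {set gT}) : Prop :=
  G \isog Grp (a : s : c :
     (a ^+ 3, s ^+ 2, (a * s) ^+ 2, c ^+ 3, [~ a, c], [~ s, c])).

Definition isDihedral (n : nat) (gT : finGroupType) (G : {set gT}) : Prop :=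
  G \isog Grp (a : s : (a ^+ n, s ^+ 2, (a * s) ^+ 2)).

Definition isZ3xZ3 (gT : finGroupType) (G : {set gT}) : Prop :=
  G \isog Grp (a : b : (a ^+ 3, b ^+ 3, [~ a, b])).

Definition isCyclicOrd (n : nat) (gT : finGroupType) (G : {set gT}) : Prop :=
  G \isog Grp (a : (a ^+ n)).

Definition isTrivialGrp (gT : finGroupType) (G : {set gT}) : Prop :=
  G \isog Grp (a : (a)).

Definition listed_types : seq (forall gT : finGroupType, {set gT} -> Prop) :=
  [:: isWreathD3; isD3xD3; isZ3Z3sdZ4; isZ3Z3sdZ2; isD3xZ3; isDihedral 6;
      isZ3xZ3; isDihedral 4; isDihedral 3; isCyclicOrd 6; isDihedral 2;
      isCyclicOrd 4; isCyclicOrd 3; isCyclicOrd 2; isTrivialGrp].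

(* Main.v *)
Require Import Defs.
From mathcomp Require Import all_boot all_fingroup.
From Stdlib Require List.
From mathcomp Require Import cyclic zify.
Set Implicit Arguments. Unset Strict Implicit. Unset Printing Implicit Defensive.
Local Open Scope group_scope.

Local Open Scope group_scope.

Definition lvalid (l : seq nat) := (size l == 6) && uniq l && all (fun x => x < 6) l.
Definition pfun (l : seq nat) : {ffun 'I_6 -> 'I_6} := [ffun x : 'I_6 => inord (nth 0 l x)].
Definition pl (l : seq nat) : {perm 'I_6} := @insubd _ _ {perm 'I_6} (1 : {perm 'I_6}) (pfun l).

Lemma pl_inj l : lvalid l -> injectiveb (pfun l).
Proof.
case/andP=> /andP[/eqP sz u] /allP a; apply/injectiveP => x y.
rewrite !ffunE => /(congr1 val).
have hx : nth 0 l x < 6 by apply: a; rewrite mem_nth // sz.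
have hy : nth 0 l y < 6 by apply: a; rewrite mem_nth // sz.
rewrite /= !inordK //.
by move/eqP; rewrite nth_uniq ?sz // => /eqP/val_inj.
Qed.

Lemma plE l x : lvalid l -> pl l x = inord (nth 0 l x).
Proof.
move=> v; rewrite -pvalE /pl insubdK ?ffunE //; exact: pl_inj.
Qed.

Definition lmul (s t : seq nat) := [seq nth 0 t (nth 0 s i) | i <- iota 0 6].

Lemma pl_mul s t u : lvalid s -> lvalid t -> lvalid u -> lmul s t == u ->
  pl u = pl s * pl t.
Proof.
move=> vs vt vu /eqP e; subst u; apply/permP => x; rewrite permM !plE //.
have hx : x < 6 := ltn_ord x.
rewrite (nth_map 0) ?size_iota // nth_iota // add0n.
move: vs => /andP[/andP[/eqP sz _] /allP a].
by rewrite inordK // a // mem_nth // sz.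
Qed.
Local Close Scope group_scope.
Definition Gl_l : seq (seq nat) := [:: [:: 0; 1; 2; 3; 4; 5];
 [:: 1; 0; 2; 3; 4; 5];
 [:: 1; 2; 0; 3; 4; 5];
 [:: 0; 1; 2; 4; 3; 5];
 [:: 0; 1; 2; 4; 5; 3];
 [:: 3; 4; 5; 0; 1; 2];
 [:: 2; 1; 0; 3; 4; 5];
 [:: 1; 0; 2; 4; 3; 5];
 [:: 1; 0; 2; 4; 5; 3];
 [:: 4; 3; 5; 0; 1; 2];
 [:: 0; 2; 1; 3; 4; 5];
 [:: 2; 0; 1; 3; 4; 5];
 [:: 1; 2; 0; 4; 3; 5];
 [:: 1; 2; 0; 4; 5; 3];
 [:: 4; 5; 3; 0; 1; 2];
 [:: 0; 1; 2; 5; 4; 3];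
 [:: 3; 4; 5; 1; 0; 2];
 [:: 0; 1; 2; 3; 5; 4];
 [:: 0; 1; 2; 5; 3; 4];
 [:: 3; 4; 5; 1; 2; 0];
 [:: 2; 1; 0; 4; 3; 5];
 [:: 2; 1; 0; 4; 5; 3];
 [:: 5; 4; 3; 0; 1; 2];
 [:: 1; 0; 2; 5; 4; 3];
 [:: 4; 3; 5; 1; 0; 2];
 [:: 1; 0; 2; 3; 5; 4];
 [:: 1; 0; 2; 5; 3; 4];
 [:: 4; 3; 5; 1; 2; 0];
 [:: 0; 2; 1; 4; 3; 5];
 [:: 0; 2; 1; 4; 5; 3];
 [:: 3; 5; 4; 0; 1; 2];
 [:: 2; 0; 1; 4; 3; 5];
 [:: 2; 0; 1; 4; 5; 3];
 [:: 5; 3; 4; 0; 1; 2];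
 [:: 1; 2; 0; 5; 4; 3];
 [:: 4; 5; 3; 1; 0; 2];
 [:: 1; 2; 0; 3; 5; 4];
 [:: 1; 2; 0; 5; 3; 4];
 [:: 4; 5; 3; 1; 2; 0];
 [:: 3; 4; 5; 2; 1; 0];
 [:: 3; 4; 5; 0; 2; 1];
 [:: 3; 4; 5; 2; 0; 1];
 [:: 2; 1; 0; 5; 4; 3];
 [:: 5; 4; 3; 1; 0; 2];
 [:: 2; 1; 0; 3; 5; 4];
 [:: 2; 1; 0; 5; 3; 4];
 [:: 5; 4; 3; 1; 2; 0];
 [:: 4; 3; 5; 2; 1; 0];
 [:: 4; 3; 5; 0; 2; 1];
 [:: 4; 3; 5; 2; 0; 1];
 [:: 0; 2; 1; 5; 4; 3];
 [:: 3; 5; 4; 1; 0; 2];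
 [:: 0; 2; 1; 3; 5; 4];
 [:: 0; 2; 1; 5; 3; 4];
 [:: 3; 5; 4; 1; 2; 0];
 [:: 2; 0; 1; 5; 4; 3];
 [:: 5; 3; 4; 1; 0; 2];
 [:: 2; 0; 1; 3; 5; 4];
 [:: 2; 0; 1; 5; 3; 4];
 [:: 5; 3; 4; 1; 2; 0];
 [:: 4; 5; 3; 2; 1; 0];
 [:: 4; 5; 3; 0; 2; 1];
 [:: 4; 5; 3; 2; 0; 1];
 [:: 5; 4; 3; 2; 1; 0];
 [:: 5; 4; 3; 0; 2; 1];
 [:: 5; 4; 3; 2; 0; 1];
 [:: 3; 5; 4; 2; 1; 0];
 [:: 3; 5; 4; 0; 2; 1];
 [:: 3; 5; 4; 2; 0; 1];
 [:: 5; 3; 4; 2; 1; 0];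
 [:: 5; 3; 4; 0; 2; 1];
 [:: 5; 3; 4; 2; 0; 1]].

Definition tab : seq (seq nat) := [:: [:: 0; 1; 2; 3; 4; 5; 6; 7; 8; 9; 10; 11; 12; 13; 14; 15; 16; 17; 18; 19; 20; 21; 22; 23; 24; 25; 26; 27; 28; 29; 30; 31; 32; 33; 34; 35; 36; 37; 38; 39; 40; 41; 42; 43; 44; 45; 46; 47; 48; 49; 50; 51; 52; 53; 54; 55; 56; 57; 58; 59; 60; 61; 62; 63; 64; 65; 66; 67; 68; 69; 70; 71];
 [:: 1; 0; 6; 7; 8; 9; 2; 3; 4; 5; 11; 10; 20; 21; 22; 23; 24; 25; 26; 27; 12; 13; 14; 15; 16; 17; 18; 19; 31; 32; 33; 28; 29; 30; 42; 43; 44; 45; 46; 47; 48; 49; 34; 35; 36; 37; 38; 39; 40; 41; 55; 56; 57; 58; 59; 50; 51; 52; 53; 54; 63; 64; 65; 60; 61; 62; 69; 70; 71; 66; 67; 68];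
 [:: 2; 10; 11; 12; 13; 14; 1; 28; 29; 30; 6; 0; 31; 32; 33; 34; 35; 36; 37; 38; 7; 8; 9; 50; 51; 52; 53; 54; 20; 21; 22; 3; 4; 5; 55; 56; 57; 58; 59; 60; 61; 62; 23; 24; 25; 26; 27; 66; 67; 68; 42; 43; 44; 45; 46; 15; 16; 17; 18; 19; 69; 70; 71; 47; 48; 49; 63; 64; 65; 39; 40; 41];
 [:: 3; 7; 12; 0; 15; 16; 20; 1; 23; 24; 28; 31; 2; 34; 35; 4; 5; 18; 17; 39; 6; 42; 43; 8; 9; 26; 25; 47; 10; 50; 51; 11; 55; 56; 13; 14; 37; 36; 60; 19; 41; 40; 21; 22; 45; 44; 63; 27; 49; 48; 29; 30; 53; 52; 66; 32; 33; 58; 57; 69; 38; 62; 61; 46; 65; 64; 54; 68; 67; 59; 71; 70];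
 [:: 4; 8; 13; 17; 18; 19; 21; 25; 26; 27; 29; 32; 36; 37; 38; 3; 40; 15; 0; 41; 44; 45; 46; 7; 48; 23; 1; 49; 52; 53; 54; 57; 58; 59; 12; 61; 34; 2; 62; 16; 39; 5; 20; 64; 42; 6; 65; 24; 47; 9; 28; 67; 50; 10; 68; 31; 70; 55; 11; 71; 35; 60; 14; 43; 63; 22; 51; 66; 30; 56; 69; 33];
 [:: 5; 16; 19; 9; 14; 0; 39; 24; 35; 3; 40; 41; 27; 38; 4; 22; 1; 30; 33; 2; 47; 60; 15; 43; 7; 51; 56; 12; 48; 61; 17; 49; 62; 18; 46; 8; 54; 59; 13; 6; 10; 11; 63; 23; 66; 69; 34; 20; 28; 31; 64; 25; 67; 70; 36; 65; 26; 68; 71; 37; 21; 29; 32; 42; 50; 55; 44; 52; 57; 45; 53; 58];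
 [:: 6; 11; 10; 20; 21; 22; 0; 31; 32; 33; 2; 1; 28; 29; 30; 42; 43; 44; 45; 46; 3; 4; 5; 55; 56; 57; 58; 59; 12; 13; 14; 7; 8; 9; 50; 51; 52; 53; 54; 63; 64; 65; 15; 16; 17; 18; 19; 69; 70; 71; 34; 35; 36; 37; 38; 23; 24; 25; 26; 27; 66; 67; 68; 39; 40; 41; 60; 61; 62; 47; 48; 49];
 [:: 7; 3; 20; 1; 23; 24; 12; 0; 15; 16; 31; 28; 6; 42; 43; 8; 9; 26; 25; 47; 2; 34; 35; 4; 5; 18; 17; 39; 11; 55; 56; 10; 50; 51; 21; 22; 45; 44; 63; 27; 49; 48; 13; 14; 37; 36; 60; 19; 41; 40; 32; 33; 58; 57; 69; 29; 30; 53; 52; 66; 46; 65; 64; 38; 62; 61; 59; 71; 70; 54; 68; 67];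
 [:: 8; 4; 21; 25; 26; 27; 13; 17; 18; 19; 32; 29; 44; 45; 46; 7; 48; 23; 1; 49; 36; 37; 38; 3; 40; 15; 0; 41; 57; 58; 59; 52; 53; 54; 20; 64; 42; 6; 65; 24; 47; 9; 12; 61; 34; 2; 62; 16; 39; 5; 31; 70; 55; 11; 71; 28; 67; 50; 10; 68; 43; 63; 22; 35; 60; 14; 56; 69; 33; 51; 66; 30];
 [:: 9; 24; 27; 5; 22; 1; 47; 16; 43; 7; 48; 49; 19; 46; 8; 14; 0; 33; 30; 6; 39; 63; 23; 35; 3; 56; 51; 20; 40; 64; 25; 41; 65; 26; 38; 4; 59; 54; 21; 2; 11; 10; 60; 15; 69; 66; 42; 12; 31; 28; 61; 17; 70; 67; 44; 62; 18; 71; 68; 45; 13; 32; 29; 34; 55; 50; 36; 57; 52; 37; 58; 53];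
 [:: 10; 2; 1; 28; 29; 30; 11; 12; 13; 14; 0; 6; 7; 8; 9; 50; 51; 52; 53; 54; 31; 32; 33; 34; 35; 36; 37; 38; 3; 4; 5; 20; 21; 22; 23; 24; 25; 26; 27; 66; 67; 68; 55; 56; 57; 58; 59; 60; 61; 62; 15; 16; 17; 18; 19; 42; 43; 44; 45; 46; 47; 48; 49; 69; 70; 71; 39; 40; 41; 63; 64; 65];
 [:: 11; 6; 0; 31; 32; 33; 10; 20; 21; 22; 1; 2; 3; 4; 5; 55; 56; 57; 58; 59; 28; 29; 30; 42; 43; 44; 45; 46; 7; 8; 9; 12; 13; 14; 15; 16; 17; 18; 19; 69; 70; 71; 50; 51; 52; 53; 54; 63; 64; 65; 23; 24; 25; 26; 27; 34; 35; 36; 37; 38; 39; 40; 41; 66; 67; 68; 47; 48; 49; 60; 61; 62];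
 [:: 12; 28; 31; 2; 34; 35; 7; 10; 50; 51; 20; 3; 11; 55; 56; 13; 14; 37; 36; 60; 1; 23; 24; 29; 30; 53; 52; 66; 6; 42; 43; 0; 15; 16; 32; 33; 58; 57; 69; 38; 62; 61; 8; 9; 26; 25; 47; 54; 68; 67; 21; 22; 45; 44; 63; 4; 5; 18; 17; 39; 59; 71; 70; 27; 49; 48; 46; 65; 64; 19; 41; 40];
 [:: 13; 29; 32; 36; 37; 38; 8; 52; 53; 54; 21; 4; 57; 58; 59; 12; 61; 34; 2; 62; 25; 26; 27; 28; 67; 50; 10; 68; 44; 45; 46; 17; 18; 19; 31; 70; 55; 11; 71; 35; 60; 14; 7; 48; 23; 1; 49; 51; 66; 30; 20; 64; 42; 6; 65; 3; 40; 15; 0; 41; 56; 69; 33; 24; 47; 9; 43; 63; 22; 16; 39; 5];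
 [:: 14; 35; 38; 30; 33; 2; 60; 51; 56; 12; 61; 62; 54; 59; 13; 9; 10; 22; 5; 11; 66; 69; 34; 24; 28; 43; 16; 31; 67; 70; 36; 68; 71; 37; 27; 29; 46; 19; 32; 1; 6; 0; 47; 50; 63; 39; 55; 7; 20; 3; 48; 52; 64; 40; 57; 49; 53; 65; 41; 58; 8; 21; 4; 23; 42; 15; 25; 44; 17; 26; 45; 18];
 [:: 15; 23; 34; 18; 17; 39; 42; 26; 25; 47; 50; 55; 37; 36; 60; 0; 41; 4; 3; 40; 45; 44; 63; 1; 49; 8; 7; 48; 53; 52; 66; 58; 57; 69; 2; 62; 13; 12; 61; 5; 19; 16; 6; 65; 21; 20; 64; 9; 27; 24; 10; 68; 29; 28; 67; 11; 71; 32; 31; 70; 14; 38; 35; 22; 46; 43; 30; 54; 51; 33; 59; 56];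
 [:: 16; 5; 39; 24; 35; 3; 19; 9; 14; 0; 41; 40; 47; 60; 15; 43; 7; 51; 56; 12; 27; 38; 4; 22; 1; 30; 33; 2; 49; 62; 18; 48; 61; 17; 63; 23; 66; 69; 34; 20; 28; 31; 46; 8; 54; 59; 13; 6; 10; 11; 65; 26; 68; 71; 37; 64; 25; 67; 70; 36; 42; 50; 55; 21; 29; 32; 45; 53; 58; 44; 52; 57];
 [:: 17; 25; 36; 4; 3; 40; 44; 8; 7; 48; 52; 57; 13; 12; 61; 18; 19; 0; 15; 16; 21; 20; 64; 26; 27; 1; 23; 24; 29; 28; 67; 32; 31; 70; 37; 38; 2; 34; 35; 41; 5; 39; 45; 46; 6; 42; 43; 49; 9; 47; 53; 54; 10; 50; 51; 58; 59; 11; 55; 56; 62; 14; 60; 65; 22; 63; 68; 30; 66; 71; 33; 69];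
 [:: 18; 26; 37; 15; 0; 41; 45; 23; 1; 49; 53; 58; 34; 2; 62; 17; 39; 3; 4; 5; 42; 6; 65; 25; 47; 7; 8; 9; 50; 10; 68; 55; 11; 71; 36; 60; 12; 13; 14; 40; 16; 19; 44; 63; 20; 21; 22; 48; 24; 27; 52; 66; 28; 29; 30; 57; 69; 31; 32; 33; 61; 35; 38; 64; 43; 46; 67; 51; 54; 70; 56; 59];
 [:: 19; 40; 41; 27; 38; 4; 16; 48; 61; 17; 39; 5; 49; 62; 18; 46; 8; 54; 59; 13; 24; 35; 3; 64; 25; 67; 70; 36; 47; 60; 15; 9; 14; 0; 65; 26; 68; 71; 37; 21; 29; 32; 43; 7; 51; 56; 12; 44; 52; 57; 63; 23; 66; 69; 34; 22; 1; 30; 33; 2; 45; 53; 58; 20; 28; 31; 42; 50; 55; 6; 10; 11];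
 [:: 20; 31; 28; 6; 42; 43; 3; 11; 55; 56; 12; 7; 10; 50; 51; 21; 22; 45; 44; 63; 0; 15; 16; 32; 33; 58; 57; 69; 2; 34; 35; 1; 23; 24; 29; 30; 53; 52; 66; 46; 65; 64; 4; 5; 18; 17; 39; 59; 71; 70; 13; 14; 37; 36; 60; 8; 9; 26; 25; 47; 54; 68; 67; 19; 41; 40; 38; 62; 61; 27; 49; 48];
 [:: 21; 32; 29; 44; 45; 46; 4; 57; 58; 59; 13; 8; 52; 53; 54; 20; 64; 42; 6; 65; 17; 18; 19; 31; 70; 55; 11; 71; 36; 37; 38; 25; 26; 27; 28; 67; 50; 10; 68; 43; 63; 22; 3; 40; 15; 0; 41; 56; 69; 33; 12; 61; 34; 2; 62; 7; 48; 23; 1; 49; 51; 66; 30; 16; 39; 5; 35; 60; 14; 24; 47; 9];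
 [:: 22; 43; 46; 33; 30; 6; 63; 56; 51; 20; 64; 65; 59; 54; 21; 5; 11; 14; 9; 10; 69; 66; 42; 16; 31; 35; 24; 28; 70; 67; 44; 71; 68; 45; 19; 32; 38; 27; 29; 0; 2; 1; 39; 55; 60; 47; 50; 3; 12; 7; 40; 57; 61; 48; 52; 41; 58; 62; 49; 53; 4; 13; 8; 15; 34; 23; 17; 36; 25; 18; 37; 26];
 [:: 23; 15; 42; 26; 25; 47; 34; 18; 17; 39; 55; 50; 45; 44; 63; 1; 49; 8; 7; 48; 37; 36; 60; 0; 41; 4; 3; 40; 58; 57; 69; 53; 52; 66; 6; 65; 21; 20; 64; 9; 27; 24; 2; 62; 13; 12; 61; 5; 19; 16; 11; 71; 32; 31; 70; 10; 68; 29; 28; 67; 22; 46; 43; 14; 38; 35; 33; 59; 56; 30; 54; 51];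
 [:: 24; 9; 47; 16; 43; 7; 27; 5; 22; 1; 49; 48; 39; 63; 23; 35; 3; 56; 51; 20; 19; 46; 8; 14; 0; 33; 30; 6; 41; 65; 26; 40; 64; 25; 60; 15; 69; 66; 42; 12; 31; 28; 38; 4; 59; 54; 21; 2; 11; 10; 62; 18; 71; 68; 45; 61; 17; 70; 67; 44; 34; 55; 50; 13; 32; 29; 37; 58; 53; 36; 57; 52];
 [:: 25; 17; 44; 8; 7; 48; 36; 4; 3; 40; 57; 52; 21; 20; 64; 26; 27; 1; 23; 24; 13; 12; 61; 18; 19; 0; 15; 16; 32; 31; 70; 29; 28; 67; 45; 46; 6; 42; 43; 49; 9; 47; 37; 38; 2; 34; 35; 41; 5; 39; 58; 59; 11; 55; 56; 53; 54; 10; 50; 51; 65; 22; 63; 62; 14; 60; 71; 33; 69; 68; 30; 66];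
 [:: 26; 18; 45; 23; 1; 49; 37; 15; 0; 41; 58; 53; 42; 6; 65; 25; 47; 7; 8; 9; 34; 2; 62; 17; 39; 3; 4; 5; 55; 11; 71; 50; 10; 68; 44; 63; 20; 21; 22; 48; 24; 27; 36; 60; 12; 13; 14; 40; 16; 19; 57; 69; 31; 32; 33; 52; 66; 28; 29; 30; 64; 43; 46; 61; 35; 38; 70; 56; 59; 67; 51; 54];
 [:: 27; 48; 49; 19; 46; 8; 24; 40; 64; 25; 47; 9; 41; 65; 26; 38; 4; 59; 54; 21; 16; 43; 7; 61; 17; 70; 67; 44; 39; 63; 23; 5; 22; 1; 62; 18; 71; 68; 45; 13; 32; 29; 35; 3; 56; 51; 20; 36; 57; 52; 60; 15; 69; 66; 42; 14; 0; 33; 30; 6; 37; 58; 53; 12; 31; 28; 34; 55; 50; 2; 11; 10];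
 [:: 28; 12; 7; 10; 50; 51; 31; 2; 34; 35; 3; 20; 1; 23; 24; 29; 30; 53; 52; 66; 11; 55; 56; 13; 14; 37; 36; 60; 0; 15; 16; 6; 42; 43; 8; 9; 26; 25; 47; 54; 68; 67; 32; 33; 58; 57; 69; 38; 62; 61; 4; 5; 18; 17; 39; 21; 22; 45; 44; 63; 27; 49; 48; 59; 71; 70; 19; 41; 40; 46; 65; 64];
 [:: 29; 13; 8; 52; 53; 54; 32; 36; 37; 38; 4; 21; 25; 26; 27; 28; 67; 50; 10; 68; 57; 58; 59; 12; 61; 34; 2; 62; 17; 18; 19; 44; 45; 46; 7; 48; 23; 1; 49; 51; 66; 30; 31; 70; 55; 11; 71; 35; 60; 14; 3; 40; 15; 0; 41; 20; 64; 42; 6; 65; 24; 47; 9; 56; 69; 33; 16; 39; 5; 43; 63; 22];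
 [:: 30; 51; 54; 14; 9; 10; 66; 35; 24; 28; 67; 68; 38; 27; 29; 33; 2; 5; 22; 1; 60; 47; 50; 56; 12; 16; 43; 7; 61; 48; 52; 62; 49; 53; 59; 13; 19; 46; 8; 11; 0; 6; 69; 34; 39; 63; 23; 31; 3; 20; 70; 36; 40; 64; 25; 71; 37; 41; 65; 26; 32; 4; 21; 55; 15; 42; 57; 17; 44; 58; 18; 45];
 [:: 31; 20; 3; 11; 55; 56; 28; 6; 42; 43; 7; 12; 0; 15; 16; 32; 33; 58; 57; 69; 10; 50; 51; 21; 22; 45; 44; 63; 1; 23; 24; 2; 34; 35; 4; 5; 18; 17; 39; 59; 71; 70; 29; 30; 53; 52; 66; 46; 65; 64; 8; 9; 26; 25; 47; 13; 14; 37; 36; 60; 19; 41; 40; 54; 68; 67; 27; 49; 48; 38; 62; 61];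
 [:: 32; 21; 4; 57; 58; 59; 29; 44; 45; 46; 8; 13; 17; 18; 19; 31; 70; 55; 11; 71; 52; 53; 54; 20; 64; 42; 6; 65; 25; 26; 27; 36; 37; 38; 3; 40; 15; 0; 41; 56; 69; 33; 28; 67; 50; 10; 68; 43; 63; 22; 7; 48; 23; 1; 49; 12; 61; 34; 2; 62; 16; 39; 5; 51; 66; 30; 24; 47; 9; 35; 60; 14];
 [:: 33; 56; 59; 22; 5; 11; 69; 43; 16; 31; 70; 71; 46; 19; 32; 30; 6; 9; 14; 0; 63; 39; 55; 51; 20; 24; 35; 3; 64; 40; 57; 65; 41; 58; 54; 21; 27; 38; 4; 10; 1; 2; 66; 42; 47; 60; 15; 28; 7; 12; 67; 44; 48; 61; 17; 68; 45; 49; 62; 18; 29; 8; 13; 50; 23; 34; 52; 25; 36; 53; 26; 37];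
 [:: 34; 50; 55; 37; 36; 60; 23; 53; 52; 66; 42; 15; 58; 57; 69; 2; 62; 13; 12; 61; 26; 25; 47; 10; 68; 29; 28; 67; 45; 44; 63; 18; 17; 39; 11; 71; 32; 31; 70; 14; 38; 35; 1; 49; 8; 7; 48; 30; 54; 51; 6; 65; 21; 20; 64; 0; 41; 4; 3; 40; 33; 59; 56; 9; 27; 24; 22; 46; 43; 5; 19; 16];
 [:: 35; 14; 60; 51; 56; 12; 38; 30; 33; 2; 62; 61; 66; 69; 34; 24; 28; 43; 16; 31; 54; 59; 13; 9; 10; 22; 5; 11; 68; 71; 37; 67; 70; 36; 47; 50; 63; 39; 55; 7; 20; 3; 27; 29; 46; 19; 32; 1; 6; 0; 49; 53; 65; 41; 58; 48; 52; 64; 40; 57; 23; 42; 15; 8; 21; 4; 26; 45; 18; 25; 44; 17];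
 [:: 36; 52; 57; 13; 12; 61; 25; 29; 28; 67; 44; 17; 32; 31; 70; 37; 38; 2; 34; 35; 8; 7; 48; 53; 54; 10; 50; 51; 21; 20; 64; 4; 3; 40; 58; 59; 11; 55; 56; 62; 14; 60; 26; 27; 1; 23; 24; 68; 30; 66; 45; 46; 6; 42; 43; 18; 19; 0; 15; 16; 71; 33; 69; 49; 9; 47; 65; 22; 63; 41; 5; 39];
 [:: 37; 53; 58; 34; 2; 62; 26; 50; 10; 68; 45; 18; 55; 11; 71; 36; 60; 12; 13; 14; 23; 1; 49; 52; 66; 28; 29; 30; 42; 6; 65; 15; 0; 41; 57; 69; 31; 32; 33; 61; 35; 38; 25; 47; 7; 8; 9; 67; 51; 54; 44; 63; 20; 21; 22; 17; 39; 3; 4; 5; 70; 56; 59; 48; 24; 27; 64; 43; 46; 40; 16; 19];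
 [:: 38; 61; 62; 54; 59; 13; 35; 67; 70; 36; 60; 14; 68; 71; 37; 27; 29; 46; 19; 32; 51; 56; 12; 48; 52; 64; 40; 57; 66; 69; 34; 30; 33; 2; 49; 53; 65; 41; 58; 8; 21; 4; 24; 28; 43; 16; 31; 25; 44; 17; 47; 50; 63; 39; 55; 9; 10; 22; 5; 11; 26; 45; 18; 7; 20; 3; 23; 42; 15; 1; 6; 0];
 [:: 39; 41; 40; 47; 60; 15; 5; 49; 62; 18; 19; 16; 48; 61; 17; 63; 23; 66; 69; 34; 9; 14; 0; 65; 26; 68; 71; 37; 27; 38; 4; 24; 35; 3; 64; 25; 67; 70; 36; 42; 50; 55; 22; 1; 30; 33; 2; 45; 53; 58; 46; 8; 54; 59; 13; 43; 7; 51; 56; 12; 44; 52; 57; 6; 10; 11; 21; 29; 32; 20; 28; 31];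
 [:: 40; 19; 16; 48; 61; 17; 41; 27; 38; 4; 5; 39; 24; 35; 3; 64; 25; 67; 70; 36; 49; 62; 18; 46; 8; 54; 59; 13; 9; 14; 0; 47; 60; 15; 43; 7; 51; 56; 12; 44; 52; 57; 65; 26; 68; 71; 37; 21; 29; 32; 22; 1; 30; 33; 2; 63; 23; 66; 69; 34; 20; 28; 31; 45; 53; 58; 6; 10; 11; 42; 50; 55];
 [:: 41; 39; 5; 49; 62; 18; 40; 47; 60; 15; 16; 19; 9; 14; 0; 65; 26; 68; 71; 37; 48; 61; 17; 63; 23; 66; 69; 34; 24; 35; 3; 27; 38; 4; 22; 1; 30; 33; 2; 45; 53; 58; 64; 25; 67; 70; 36; 42; 50; 55; 43; 7; 51; 56; 12; 46; 8; 54; 59; 13; 6; 10; 11; 44; 52; 57; 20; 28; 31; 21; 29; 32];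
 [:: 42; 55; 50; 45; 44; 63; 15; 58; 57; 69; 34; 23; 53; 52; 66; 6; 65; 21; 20; 64; 18; 17; 39; 11; 71; 32; 31; 70; 37; 36; 60; 26; 25; 47; 10; 68; 29; 28; 67; 22; 46; 43; 0; 41; 4; 3; 40; 33; 59; 56; 2; 62; 13; 12; 61; 1; 49; 8; 7; 48; 30; 54; 51; 5; 19; 16; 14; 38; 35; 9; 27; 24];
 [:: 43; 22; 63; 56; 51; 20; 46; 33; 30; 6; 65; 64; 69; 66; 42; 16; 31; 35; 24; 28; 59; 54; 21; 5; 11; 14; 9; 10; 71; 68; 45; 70; 67; 44; 39; 55; 60; 47; 50; 3; 12; 7; 19; 32; 38; 27; 29; 0; 2; 1; 41; 58; 62; 49; 53; 40; 57; 61; 48; 52; 15; 34; 23; 4; 13; 8; 18; 37; 26; 17; 36; 25];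
 [:: 44; 57; 52; 21; 20; 64; 17; 32; 31; 70; 36; 25; 29; 28; 67; 45; 46; 6; 42; 43; 4; 3; 40; 58; 59; 11; 55; 56; 13; 12; 61; 8; 7; 48; 53; 54; 10; 50; 51; 65; 22; 63; 18; 19; 0; 15; 16; 71; 33; 69; 37; 38; 2; 34; 35; 26; 27; 1; 23; 24; 68; 30; 66; 41; 5; 39; 62; 14; 60; 49; 9; 47];
 [:: 45; 58; 53; 42; 6; 65; 18; 55; 11; 71; 37; 26; 50; 10; 68; 44; 63; 20; 21; 22; 15; 0; 41; 57; 69; 31; 32; 33; 34; 2; 62; 23; 1; 49; 52; 66; 28; 29; 30; 64; 43; 46; 17; 39; 3; 4; 5; 70; 56; 59; 36; 60; 12; 13; 14; 25; 47; 7; 8; 9; 67; 51; 54; 40; 16; 19; 61; 35; 38; 48; 24; 27];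
 [:: 46; 64; 65; 59; 54; 21; 43; 70; 67; 44; 63; 22; 71; 68; 45; 19; 32; 38; 27; 29; 56; 51; 20; 40; 57; 61; 48; 52; 69; 66; 42; 33; 30; 6; 41; 58; 62; 49; 53; 4; 13; 8; 16; 31; 35; 24; 28; 17; 36; 25; 39; 55; 60; 47; 50; 5; 11; 14; 9; 10; 18; 37; 26; 3; 12; 7; 15; 34; 23; 0; 2; 1];
 [:: 47; 49; 48; 39; 63; 23; 9; 41; 65; 26; 27; 24; 40; 64; 25; 60; 15; 69; 66; 42; 5; 22; 1; 62; 18; 71; 68; 45; 19; 46; 8; 16; 43; 7; 61; 17; 70; 67; 44; 34; 55; 50; 14; 0; 33; 30; 6; 37; 58; 53; 38; 4; 59; 54; 21; 35; 3; 56; 51; 20; 36; 57; 52; 2; 11; 10; 13; 32; 29; 12; 31; 28];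
 [:: 48; 27; 24; 40; 64; 25; 49; 19; 46; 8; 9; 47; 16; 43; 7; 61; 17; 70; 67; 44; 41; 65; 26; 38; 4; 59; 54; 21; 5; 22; 1; 39; 63; 23; 35; 3; 56; 51; 20; 36; 57; 52; 62; 18; 71; 68; 45; 13; 32; 29; 14; 0; 33; 30; 6; 60; 15; 69; 66; 42; 12; 31; 28; 37; 58; 53; 2; 11; 10; 34; 55; 50];
 [:: 49; 47; 9; 41; 65; 26; 48; 39; 63; 23; 24; 27; 5; 22; 1; 62; 18; 71; 68; 45; 40; 64; 25; 60; 15; 69; 66; 42; 16; 43; 7; 19; 46; 8; 14; 0; 33; 30; 6; 37; 58; 53; 61; 17; 70; 67; 44; 34; 55; 50; 35; 3; 56; 51; 20; 38; 4; 59; 54; 21; 2; 11; 10; 36; 57; 52; 12; 31; 28; 13; 32; 29];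
 [:: 50; 34; 23; 53; 52; 66; 55; 37; 36; 60; 15; 42; 26; 25; 47; 10; 68; 29; 28; 67; 58; 57; 69; 2; 62; 13; 12; 61; 18; 17; 39; 45; 44; 63; 1; 49; 8; 7; 48; 30; 54; 51; 11; 71; 32; 31; 70; 14; 38; 35; 0; 41; 4; 3; 40; 6; 65; 21; 20; 64; 9; 27; 24; 33; 59; 56; 5; 19; 16; 22; 46; 43];
 [:: 51; 30; 66; 35; 24; 28; 54; 14; 9; 10; 68; 67; 60; 47; 50; 56; 12; 16; 43; 7; 38; 27; 29; 33; 2; 5; 22; 1; 62; 49; 53; 61; 48; 52; 69; 34; 39; 63; 23; 31; 3; 20; 59; 13; 19; 46; 8; 11; 0; 6; 71; 37; 41; 65; 26; 70; 36; 40; 64; 25; 55; 15; 42; 32; 4; 21; 58; 18; 45; 57; 17; 44];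
 [:: 52; 36; 25; 29; 28; 67; 57; 13; 12; 61; 17; 44; 8; 7; 48; 53; 54; 10; 50; 51; 32; 31; 70; 37; 38; 2; 34; 35; 4; 3; 40; 21; 20; 64; 26; 27; 1; 23; 24; 68; 30; 66; 58; 59; 11; 55; 56; 62; 14; 60; 18; 19; 0; 15; 16; 45; 46; 6; 42; 43; 49; 9; 47; 71; 33; 69; 41; 5; 39; 65; 22; 63];
 [:: 53; 37; 26; 50; 10; 68; 58; 34; 2; 62; 18; 45; 23; 1; 49; 52; 66; 28; 29; 30; 55; 11; 71; 36; 60; 12; 13; 14; 15; 0; 41; 42; 6; 65; 25; 47; 7; 8; 9; 67; 51; 54; 57; 69; 31; 32; 33; 61; 35; 38; 17; 39; 3; 4; 5; 44; 63; 20; 21; 22; 48; 24; 27; 70; 56; 59; 40; 16; 19; 64; 43; 46];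
 [:: 54; 67; 68; 38; 27; 29; 51; 61; 48; 52; 66; 30; 62; 49; 53; 59; 13; 19; 46; 8; 35; 24; 28; 70; 36; 40; 64; 25; 60; 47; 50; 14; 9; 10; 71; 37; 41; 65; 26; 32; 4; 21; 56; 12; 16; 43; 7; 57; 17; 44; 69; 34; 39; 63; 23; 33; 2; 5; 22; 1; 58; 18; 45; 31; 3; 20; 55; 15; 42; 11; 0; 6];
 [:: 55; 42; 15; 58; 57; 69; 50; 45; 44; 63; 23; 34; 18; 17; 39; 11; 71; 32; 31; 70; 53; 52; 66; 6; 65; 21; 20; 64; 26; 25; 47; 37; 36; 60; 0; 41; 4; 3; 40; 33; 59; 56; 10; 68; 29; 28; 67; 22; 46; 43; 1; 49; 8; 7; 48; 2; 62; 13; 12; 61; 5; 19; 16; 30; 54; 51; 9; 27; 24; 14; 38; 35];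
 [:: 56; 33; 69; 43; 16; 31; 59; 22; 5; 11; 71; 70; 63; 39; 55; 51; 20; 24; 35; 3; 46; 19; 32; 30; 6; 9; 14; 0; 65; 41; 58; 64; 40; 57; 66; 42; 47; 60; 15; 28; 7; 12; 54; 21; 27; 38; 4; 10; 1; 2; 68; 45; 49; 62; 18; 67; 44; 48; 61; 17; 50; 23; 34; 29; 8; 13; 53; 26; 37; 52; 25; 36];
 [:: 57; 44; 17; 32; 31; 70; 52; 21; 20; 64; 25; 36; 4; 3; 40; 58; 59; 11; 55; 56; 29; 28; 67; 45; 46; 6; 42; 43; 8; 7; 48; 13; 12; 61; 18; 19; 0; 15; 16; 71; 33; 69; 53; 54; 10; 50; 51; 65; 22; 63; 26; 27; 1; 23; 24; 37; 38; 2; 34; 35; 41; 5; 39; 68; 30; 66; 49; 9; 47; 62; 14; 60];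
 [:: 58; 45; 18; 55; 11; 71; 53; 42; 6; 65; 26; 37; 15; 0; 41; 57; 69; 31; 32; 33; 50; 10; 68; 44; 63; 20; 21; 22; 23; 1; 49; 34; 2; 62; 17; 39; 3; 4; 5; 70; 56; 59; 52; 66; 28; 29; 30; 64; 43; 46; 25; 47; 7; 8; 9; 36; 60; 12; 13; 14; 40; 16; 19; 67; 51; 54; 48; 24; 27; 61; 35; 38];
 [:: 59; 70; 71; 46; 19; 32; 56; 64; 40; 57; 69; 33; 65; 41; 58; 54; 21; 27; 38; 4; 43; 16; 31; 67; 44; 48; 61; 17; 63; 39; 55; 22; 5; 11; 68; 45; 49; 62; 18; 29; 8; 13; 51; 20; 24; 35; 3; 52; 25; 36; 66; 42; 47; 60; 15; 30; 6; 9; 14; 0; 53; 26; 37; 28; 7; 12; 50; 23; 34; 10; 1; 2];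
 [:: 60; 62; 61; 66; 69; 34; 14; 68; 71; 37; 38; 35; 67; 70; 36; 47; 50; 63; 39; 55; 30; 33; 2; 49; 53; 65; 41; 58; 54; 59; 13; 51; 56; 12; 48; 52; 64; 40; 57; 23; 42; 15; 9; 10; 22; 5; 11; 26; 45; 18; 27; 29; 46; 19; 32; 24; 28; 43; 16; 31; 25; 44; 17; 1; 6; 0; 8; 21; 4; 7; 20; 3];
 [:: 61; 38; 35; 67; 70; 36; 62; 54; 59; 13; 14; 60; 51; 56; 12; 48; 52; 64; 40; 57; 68; 71; 37; 27; 29; 46; 19; 32; 30; 33; 2; 66; 69; 34; 24; 28; 43; 16; 31; 25; 44; 17; 49; 53; 65; 41; 58; 8; 21; 4; 9; 10; 22; 5; 11; 47; 50; 63; 39; 55; 7; 20; 3; 26; 45; 18; 1; 6; 0; 23; 42; 15];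
 [:: 62; 60; 14; 68; 71; 37; 61; 66; 69; 34; 35; 38; 30; 33; 2; 49; 53; 65; 41; 58; 67; 70; 36; 47; 50; 63; 39; 55; 51; 56; 12; 54; 59; 13; 9; 10; 22; 5; 11; 26; 45; 18; 48; 52; 64; 40; 57; 23; 42; 15; 24; 28; 43; 16; 31; 27; 29; 46; 19; 32; 1; 6; 0; 25; 44; 17; 7; 20; 3; 8; 21; 4];
 [:: 63; 65; 64; 69; 66; 42; 22; 71; 68; 45; 46; 43; 70; 67; 44; 39; 55; 60; 47; 50; 33; 30; 6; 41; 58; 62; 49; 53; 59; 54; 21; 56; 51; 20; 40; 57; 61; 48; 52; 15; 34; 23; 5; 11; 14; 9; 10; 18; 37; 26; 19; 32; 38; 27; 29; 16; 31; 35; 24; 28; 17; 36; 25; 0; 2; 1; 4; 13; 8; 3; 12; 7];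
 [:: 64; 46; 43; 70; 67; 44; 65; 59; 54; 21; 22; 63; 56; 51; 20; 40; 57; 61; 48; 52; 71; 68; 45; 19; 32; 38; 27; 29; 33; 30; 6; 69; 66; 42; 16; 31; 35; 24; 28; 17; 36; 25; 41; 58; 62; 49; 53; 4; 13; 8; 5; 11; 14; 9; 10; 39; 55; 60; 47; 50; 3; 12; 7; 18; 37; 26; 0; 2; 1; 15; 34; 23];
 [:: 65; 63; 22; 71; 68; 45; 64; 69; 66; 42; 43; 46; 33; 30; 6; 41; 58; 62; 49; 53; 70; 67; 44; 39; 55; 60; 47; 50; 56; 51; 20; 59; 54; 21; 5; 11; 14; 9; 10; 18; 37; 26; 40; 57; 61; 48; 52; 15; 34; 23; 16; 31; 35; 24; 28; 19; 32; 38; 27; 29; 0; 2; 1; 17; 36; 25; 3; 12; 7; 4; 13; 8];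
 [:: 66; 68; 67; 60; 47; 50; 30; 62; 49; 53; 54; 51; 61; 48; 52; 69; 34; 39; 63; 23; 14; 9; 10; 71; 37; 41; 65; 26; 38; 27; 29; 35; 24; 28; 70; 36; 40; 64; 25; 55; 15; 42; 33; 2; 5; 22; 1; 58; 18; 45; 59; 13; 19; 46; 8; 56; 12; 16; 43; 7; 57; 17; 44; 11; 0; 6; 32; 4; 21; 31; 3; 20];
 [:: 67; 54; 51; 61; 48; 52; 68; 38; 27; 29; 30; 66; 35; 24; 28; 70; 36; 40; 64; 25; 62; 49; 53; 59; 13; 19; 46; 8; 14; 9; 10; 60; 47; 50; 56; 12; 16; 43; 7; 57; 17; 44; 71; 37; 41; 65; 26; 32; 4; 21; 33; 2; 5; 22; 1; 69; 34; 39; 63; 23; 31; 3; 20; 58; 18; 45; 11; 0; 6; 55; 15; 42];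
 [:: 68; 66; 30; 62; 49; 53; 67; 60; 47; 50; 51; 54; 14; 9; 10; 71; 37; 41; 65; 26; 61; 48; 52; 69; 34; 39; 63; 23; 35; 24; 28; 38; 27; 29; 33; 2; 5; 22; 1; 58; 18; 45; 70; 36; 40; 64; 25; 55; 15; 42; 56; 12; 16; 43; 7; 59; 13; 19; 46; 8; 11; 0; 6; 57; 17; 44; 31; 3; 20; 32; 4; 21];
 [:: 69; 71; 70; 63; 39; 55; 33; 65; 41; 58; 59; 56; 64; 40; 57; 66; 42; 47; 60; 15; 22; 5; 11; 68; 45; 49; 62; 18; 46; 19; 32; 43; 16; 31; 67; 44; 48; 61; 17; 50; 23; 34; 30; 6; 9; 14; 0; 53; 26; 37; 54; 21; 27; 38; 4; 51; 20; 24; 35; 3; 52; 25; 36; 10; 1; 2; 29; 8; 13; 28; 7; 12];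
 [:: 70; 59; 56; 64; 40; 57; 71; 46; 19; 32; 33; 69; 43; 16; 31; 67; 44; 48; 61; 17; 65; 41; 58; 54; 21; 27; 38; 4; 22; 5; 11; 63; 39; 55; 51; 20; 24; 35; 3; 52; 25; 36; 68; 45; 49; 62; 18; 29; 8; 13; 30; 6; 9; 14; 0; 66; 42; 47; 60; 15; 28; 7; 12; 53; 26; 37; 10; 1; 2; 50; 23; 34];
 [:: 71; 69; 33; 65; 41; 58; 70; 63; 39; 55; 56; 59; 22; 5; 11; 68; 45; 49; 62; 18; 64; 40; 57; 66; 42; 47; 60; 15; 43; 16; 31; 46; 19; 32; 30; 6; 9; 14; 0; 53; 26; 37; 67; 44; 48; 61; 17; 50; 23; 34; 51; 20; 24; 35; 3; 54; 21; 27; 38; 4; 10; 1; 2; 52; 25; 36; 28; 7; 12; 29; 8; 13]].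

Definition itab : seq nat := [:: 0; 1; 11; 3; 18; 5; 6; 7; 26; 16; 10; 2; 31; 58; 41; 15; 9; 17; 4; 33; 20; 45; 39; 23; 24; 25; 8; 56; 28; 53; 40; 12; 37; 19; 55; 49; 57; 32; 71; 22; 30; 14; 42; 47; 44; 21; 69; 43; 51; 35; 50; 48; 52; 29; 70; 34; 27; 36; 13; 59; 65; 68; 62; 63; 66; 60; 64; 67; 61; 46; 54; 38].

Definition entries : seq (nat * seq nat) := [:: (14, [:: 0]);
 (13, [:: 24]);
 (13, [:: 5]);
 (13, [:: 63]);
 (13, [:: 59]);
 (13, [:: 62]);
 (13, [:: 67]);
 (13, [:: 23]);
 (13, [:: 50]);
 (13, [:: 25]);
 (13, [:: 7]);
 (13, [:: 20]);
 (13, [:: 42]);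
 (13, [:: 52]);
 (13, [:: 28]);
 (13, [:: 44]);
 (13, [:: 1]);
 (13, [:: 10]);
 (13, [:: 3]);
 (13, [:: 6]);
 (13, [:: 17]);
 (13, [:: 15]);
 (12, [:: 4]);
 (12, [:: 2]);
 (12, [:: 32]);
 (12, [:: 13]);
 (11, [:: 30]);
 (11, [:: 56]);
 (11, [:: 35]);
 (11, [:: 60]);
 (11, [:: 22]);
 (11, [:: 69]);
 (11, [:: 54]);
 (11, [:: 68]);
 (11, [:: 9]);
 (10, [:: 25; 62]);
 (10, [:: 52; 5]);
 (10, [:: 23; 67]);
 (10, [:: 28; 59]);
 (10, [:: 44; 24]);
 (10, [:: 50; 24]);
 (10, [:: 7; 24]);
 (10, [:: 20; 67]);
 (10, [:: 42; 5]);
 (10, [:: 3; 6]);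
 (10, [:: 3; 10]);
 (10, [:: 3; 1]);
 (10, [:: 17; 6]);
 (10, [:: 1; 15]);
 (10, [:: 17; 10]);
 (10, [:: 1; 17]);
 (10, [:: 15; 6]);
 (10, [:: 10; 15]);
 (9, [:: 36]);
 (9, [:: 34]);
 (9, [:: 29]);
 (9, [:: 12]);
 (9, [:: 21]);
 (9, [:: 8]);
 (8, [:: 2; 7]);
 (8, [:: 2; 25]);
 (8, [:: 4; 7]);
 (8, [:: 2; 23]);
 (8, [:: 4; 28]);
 (8, [:: 4; 20]);
 (8, [:: 13; 23]);
 (8, [:: 32; 23]);
 (8, [:: 13; 50]);
 (8, [:: 37; 25]);
 (8, [:: 13; 7]);
 (8, [:: 32; 50]);
 (9, [:: 48]);
 (9, [:: 19]);
 (9, [:: 43]);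
 (9, [:: 41]);
 (9, [:: 71]);
 (9, [:: 66]);
 (8, [:: 2; 1]);
 (8, [:: 4; 3]);
 (8, [:: 13; 24]);
 (8, [:: 32; 5]);
 (7, [:: 27; 6]);
 (7, [:: 40; 10]);
 (7, [:: 65; 1]);
 (7, [:: 39; 6]);
 (7, [:: 35; 15]);
 (7, [:: 70; 1]);
 (7, [:: 69; 3]);
 (7, [:: 61; 6]);
 (7, [:: 16; 1]);
 (6, [:: 2; 4]);
 (5, [:: 34; 1]);
 (5, [:: 36; 1]);
 (5, [:: 12; 1]);
 (5, [:: 21; 3]);
 (5, [:: 29; 3]);
 (5, [:: 8; 3]);
 (5, [:: 64; 5]);
 (5, [:: 38; 24]);
 (5, [:: 51; 59]);
 (5, [:: 41; 63]);
 (5, [:: 33; 63]);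
 (5, [:: 47; 62]);
 (3, [:: 2; 4; 7]);
 (4, [:: 32; 5; 13]);
 (4, [:: 13; 24; 32]);
 (4, [:: 2; 1; 4]);
 (4, [:: 4; 3; 2]);
 (1, [:: 13; 24; 32; 5]);
 (1, [:: 2; 1; 4; 3]);
 (2, [:: 2; 4; 16]);
 (0, [:: 2; 1; 4; 3; 5])].
Local Open Scope group_scope.

Definition tabf i j := nth 0%N (nth [::] tab i) j.
Definition itabf i := nth 0%N itab i.
Definition elt i := pl (nth [::] Gl_l i).
Definition I72 := iota 0 72.
Definition Gl_check := (size Gl_l == 72) && uniq Gl_l && all lvalid Gl_l && (nth [::] Gl_l 0 == iota 0 6).
Definition tab_check := all (fun i => all (fun j => (tabf i j < 72) && (lmul (nth [::] Gl_l i) (nth [::] Gl_l j) == nth [::] Gl_l (tabf i j))) I72) I72.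
Definition itab_check := all (fun i => (itabf i < 72) && (tabf i (itabf i) == 0%N)) I72.
Lemma Gl_checkP : Gl_check. Proof. by vm_compute. Qed.
Lemma tab_checkP : tab_check. Proof. by vm_compute. Qed.
Lemma itab_checkP : itab_check. Proof. by vm_compute. Qed.

Lemma Gl_valid i : i < 72 -> lvalid (nth [::] Gl_l i).
Proof.
move=> hi; have := Gl_checkP; case/andP=> /andP[/andP[/eqP sz _] /allP a] _.
by apply: a; rewrite mem_nth // sz.
Qed.

Lemma tabf_lt i j : i < 72 -> j < 72 -> tabf i j < 72.
Proof.
move=> hi hj; have /allP/(_ i) := tab_checkP; rewrite mem_iota hi => /(_ isT).
by move/allP/(_ j); rewrite mem_iota hj => /(_ isT) /andP[].
Qed.

Lemma elt_mul i j : i < 72 -> j < 72 -> elt (tabf i j) = elt i * elt j.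
Proof.
move=> hi hj; have /allP/(_ i) := tab_checkP; rewrite mem_iota hi => /(_ isT).
move/allP/(_ j); rewrite mem_iota hj => /(_ isT) /andP[hl he].
by apply: pl_mul; rewrite ?Gl_valid.
Qed.

Lemma elt1 : elt 0 = 1.
Proof.
apply/permP => x; rewrite perm1 plE ?Gl_valid //.
have -> : nth [::] Gl_l 0 = iota 0 6 by have := Gl_checkP; case/andP=> _ /eqP.
by rewrite nth_iota // inord_val.
Qed.

Lemma itabf_lt i : i < 72 -> itabf i < 72.
Proof. by move=> hi; have /allP/(_ i) := itab_checkP; rewrite mem_iota hi => /(_ isT) /andP[]. Qed.

Lemma elt_inv i : i < 72 -> elt (itabf i) = (elt i)^-1.
Proof.
move=> hi; have /allP/(_ i) := itab_checkP; rewrite mem_iota hi => /(_ isT) /andP[hl /eqP he].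
apply/eqP; rewrite eq_sym eq_invg_mul -elt_mul // he elt1 //.
Qed.

Lemma elt_inj i j : i < 72 -> j < 72 -> elt i = elt j -> i = j.
Proof.
move=> hi hj e.
have vi := Gl_valid hi; have vj := Gl_valid hj.
have el : nth [::] Gl_l i = nth [::] Gl_l j.
  move: (vi) (vj) => /andP[/andP[/eqP si _] _] /andP[/andP[/eqP sj _] _].
  apply: (@eq_from_nth _ 0%N); first by rewrite si sj.
  move=> k; rewrite si => hk.
  have := congr1 (fun p : {perm 'I_6} => val (p (Ordinal hk))) e.
  have hki : nth 0%N (nth [::] Gl_l i) k < 6.
    by move: vi => /andP[_ /allP]; apply; rewrite mem_nth // si.
  have hkj : nth 0%N (nth [::] Gl_l j) k < 6.
    by move: vj => /andP[_ /allP]; apply; rewrite mem_nth // sj.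
  by rewrite /elt !plE //= !inordK.
have := Gl_checkP; case/andP=> /andP[/andP[/eqP sz u] _] _.
by apply/eqP; rewrite -(nth_uniq [::] _ _ u) ?sz // el.
Qed.

Local Open Scope group_scope.
Import Presentation.

Fixpoint fholds (gT : finGroupType) (e : seq gT) (f : formula) : bool :=
  match f with
  | Eq2 s t => eval e s == eval e t
  | And f1 f2 => fholds e f1 && fholds e f2
  end.

Lemma and_relE (xT : finType) (x1 x2 : xT) r :
  bool_of_rel (@and_rel xT x1 x2 r) = (x1 == x2) && bool_of_rel r.
Proof. by case: r => //=; rewrite andbT. Qed.

Lemma relE (gT : finGroupType) (e : seq gT) f r :
  bool_of_rel (Presentation.rel e f r) = fholds e f && bool_of_rel r.
Proof.
elim: f r => [s t | f1 IH1 f2 IH2] r /=; first by rewrite and_relE.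
by rewrite IH1 IH2 andbA.
Qed.

Fixpoint pbody n (q : type) : formula :=
  match q with Generator q' => pbody n.+1 (q' (Cst n)) | Formula f => f end.
Fixpoint parity n (q : type) : nat :=
  match q with Generator q' => (parity n.+1 (q' (Cst n))).+1 | Formula _ => 0%N end.
Definition joincyc (gT : finGroupType) (A : {set gT}) (xs : seq gT) :=
  foldl (fun B x => B <*> <[x]>) A xs.

Lemma satP (gT : finGroupType) (vT : finType) (B : {set gT}) n (s : vT -> env gT) q :
  sat B n s q <-> exists v xs, size xs = parity n q /\
     (let: Env A e := s v in (joincyc A xs == B) && fholds (rev e ++ xs) (pbody n q)).
Proof.
elim: q n vT s => [q' IH | f] n vT s /=.
  apply: iff_trans (IH (Cst n) n.+1 _ _) _; split.
    case=> [[v x] [xs [sz H]]]; exists v, (x :: xs); split; first by rewrite /= sz.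
    by move: H => /=; case: (s v) => A e /=; rewrite rev_cons cat_rcons.
  case=> v [[|x xs] [//= [sz] H]]; exists (v, x), xs; split => //.
  by move: H; case: (s v) => A e /=; rewrite rev_cons cat_rcons.
split.
  case/existsP => v; case E: (s v) => [A e]; rewrite and_relE relE andbT => H.
  by exists v, [::]; rewrite E cats0.
case=> v [xs [/size0nil -> H]]; apply/existsP; exists v; move: H.
by case: (s v) => A e; rewrite and_relE relE andbT cats0.
Qed.

Definition ar (p : term -> type) := parity 1 (p (Cst 0)).
Definition bd (p : term -> type) := pbody 1 (p (Cst 0)).

Lemma homP (gT : finGroupType) (G : {set gT}) p :
  G \homg Grp p <-> exists x xs, size xs = ar p /\
     (joincyc <[x]> xs == G) && fholds (x :: xs) (bd p).
Proof. exact: satP. Qed.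

Lemma joincycE (gT : finGroupType) (Y : {set gT}) xs :
  joincyc <<Y>> xs = <<Y :|: [set z in xs]>>.
Proof.
elim: xs Y => [|x xs IH] Y /=.
  by congr <<_>>; apply/setP=> z; rewrite !inE orbF.
rewrite /joincyc /= -/(joincyc _ _).
have -> : <<Y>> <*> <[x]> = <<Y :|: [set x]>>.
  by rewrite /cycle joing_idl joing_idr.
rewrite IH; congr <<_>>; apply/setP=> z; rewrite !inE orbA.
by [].
Qed.

Lemma gen_ofE (gT : finGroupType) (x : gT) xs :
  joincyc <[x]> xs = <<[set z in x :: xs]>>.
Proof.
rewrite /cycle joincycE; congr <<_>>; apply/setP=> z; rewrite !inE.
by [].
Qed.

Lemma expg_pair (gT rT : finGroupType) (x : gT) (y : rT) n :
  (x, y) ^+ n = (x ^+ n, y ^+ n).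
Proof. by elim: n => [|n IH]; rewrite ?expg0 // !expgS IH. Qed.

Lemma eval_zip (gT rT : finGroupType) (a : seq gT) (b : seq rT) t :
  size a = size b -> eval (zip a b) t = (eval a t, eval b t).
Proof.
move=> sz; elim: t => //= [i | t IH | t IH n | t1 IH1 t2 IH2 | t1 IH1 t2 IH2 | t1 IH1 t2 IH2].
- exact: nth_zip.
- by rewrite IH.
- by rewrite IH expg_pair.
- by rewrite IH1 IH2.
- by rewrite IH1 IH2.
- by rewrite IH1 IH2.
Qed.

Lemma fholds_zip (gT rT : finGroupType) (a : seq gT) (b : seq rT) f :
  size a = size b -> fholds (zip a b) f = fholds a f && fholds b f.
Proof.
move=> sz; elim: f => [s t | f1 IH1 f2 IH2] /=.
  by rewrite !eval_zip // xpair_eqE.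
by rewrite IH1 IH2 andbACA.
Qed.

Lemma imset_seq (aT rT : finType) (f : aT -> rT) (s : seq aT) :
  f @: [set z in s] = [set z in map f s].
Proof.
apply/setP => z; rewrite inE; apply/imsetP/mapP => [[w]|[w]]; rewrite ?inE => ws ->;
  by exists w; rewrite ?inE.
Qed.

Lemma iso_of_bound (gT : finGroupType) (p : term -> type) (M : {group gT}) N :
  M \homg Grp p -> #|M| = N ->
  (forall (rT : finGroupType) (H : {group rT}), H \homg Grp p -> #|H| <= N) ->
  M \isog Grp p.
Proof.
move=> homM oM bnd; apply: intro_isoGrp => // rT H homH.
have [x [xs [szx /andP[/eqP defM fx]]]] := (homP M p).1 homM.
have [y [ys [szy /andP[/eqP defH fy]]]] := (homP H p).1 homH.
have sz : size (x :: xs) = size (y :: ys) by rewrite /= szx szy.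
pose D := <<[set z in zip (x :: xs) (y :: ys)]>>%G.
have homD : D \homg Grp p.
  apply/(homP D p); exists (x, y), (zip xs ys); split.
    by rewrite size_zip szx szy minnn.
  rewrite gen_ofE eqxx /=.
  by rewrite -/(zip (x :: xs) (y :: ys)) fholds_zip // fx fy.
have oD := bnd _ D homD.
have sDT : D \subset setT by apply: subsetT.
have fD : [morphism of fst] @* D = M.
  rewrite morphim_gen ?subsetT // morphimE setTI imset_seq.
  rewrite -defM gen_ofE; congr <<[set z in _]>>.
  by rewrite (@eq_map _ _ _ fst) // -/(unzip1 _) (unzip1_zip (eq_leq sz)).
have sD : [morphism of snd] @* D = H.
  rewrite morphim_gen ?subsetT // morphimE setTI imset_seq.
  rewrite -defH gen_ofE; congr <<[set z in _]>>.
  by rewrite (@eq_map _ _ _ snd) // -/(unzip2 _) (unzip2_zip (eq_leq (esym sz))).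
have hMD : M \homg D by rewrite -fD morphim_homg.
have hHD : H \homg D by rewrite -sD morphim_homg.
have iMD : M \isog D by rewrite isogEcard hMD oM.
apply: homg_trans hHD _; apply: isog_hom; rewrite isog_sym; exact: iMD.
Qed.

Section Bounds.
Variable gT : finGroupType.
Implicit Types (x y : gT) (ys : seq gT).

Lemma memgs ys z : z \in ys -> z \in <<[set w in ys]>>.
Proof. by move=> h; apply: mem_gen; rewrite inE. Qed.

Lemma order_le x n : 0 < n -> x ^+ n = 1 -> #[x] <= n.
Proof. by move=> n0 e; apply: dvdn_leq => //; rewrite order_dvdn e. Qed.

Lemma card_gen1 x n : 0 < n -> x ^+ n = 1 -> #|<<[set z in [:: x]]>>| <= n.
Proof.
move=> n0 e; have -> : [set z in [:: x]] = [set x] by apply/setP=> z; rewrite !inE.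
exact: order_le.
Qed.

Lemma step_bound x ys m n : 0 < n -> x ^+ n = 1 -> #|<<[set z in ys]>>| <= m ->
  all (fun y => y ^ x \in <<[set z in ys]>>) ys ->
  #|<<[set z in rcons ys x]>>| <= m * n.
Proof.
move=> n0 e bJ /allP hJ.
set J := <<[set z in ys]>>.
have -> : <<[set z in rcons ys x]>> = J <*> <[x]>.
  rewrite /J /cycle joing_idl joing_idr; congr <<_>>.
  by apply/setP => z; rewrite !inE mem_rcons in_cons orbC.
have nJ : x \in 'N(J).
  rewrite inE /J -genJ gen_subG; apply/subsetP => z.
  rewrite mem_conjg inE => hz.
  by rewrite -(conjgKV x z); apply: hJ.
rewrite norm_joinEr ?cycle_subG //.
apply: leq_trans (_ : #|J| * #|<[x]>| <= m * n).
  rewrite mul_cardG; apply: leq_pmulr; apply: cardG_gt0.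
by apply: leq_mul => //; apply: order_le.
Qed.

Lemma dih_conj (a s : gT) : s ^+ 2 = 1 -> (a * s) ^+ 2 = 1 -> a ^ s = a^-1.
Proof.
move=> s2 as2.
have sV : s^-1 = s.
  by apply/eqP; rewrite eq_invg_mul; apply/eqP; rewrite -s2 expgS expg1.
have h : (a * s) * (a * s) = 1 by rewrite -as2 expgS expg1.
rewrite conjgE sV; apply/eqP; rewrite eq_sym eq_invg_mul.
by rewrite mulgA h.
Qed.

Lemma comm_conj x y : [~ x, y] = 1 -> x ^ y = x.
Proof. by move/eqP/conjg_fixP. Qed.

Lemma comm_conj' x y : [~ x, y] = 1 -> y ^ x = y.
Proof. by move/eqP/commgP/commute_sym/commgP/conjg_fixP. Qed.

End Bounds.

Local Open Scope group_scope.
Import Presentation.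

Ltac getp P := let Q := eval unfold isWreathD3, isD3xD3, isZ3Z3sdZ4, isZ3Z3sdZ2,
   isD3xZ3, isDihedral, isZ3xZ3, isCyclicOrd, isTrivialGrp in P in
  match Q with Presentation.iso _ ?p => exact p end.
Definition p_wr : term -> type := ltac:(getp (isWreathD3 [set: {perm 'I_1}])).
Definition p_d3d3 : term -> type := ltac:(getp (isD3xD3 [set: {perm 'I_1}])).
Definition p_sd4 : term -> type := ltac:(getp (isZ3Z3sdZ4 [set: {perm 'I_1}])).
Definition p_sd2 : term -> type := ltac:(getp (isZ3Z3sdZ2 [set: {perm 'I_1}])).
Definition p_d3z3 : term -> type := ltac:(getp (isD3xZ3 [set: {perm 'I_1}])).
Definition p_dih (n : nat) : term -> type := ltac:(getp (isDihedral n [set: {perm 'I_1}])).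
Definition p_z3z3 : term -> type := ltac:(getp (isZ3xZ3 [set: {perm 'I_1}])).
Definition p_cyc (n : nat) : term -> type := ltac:(getp (isCyclicOrd n [set: {perm 'I_1}])).
Definition p_triv : term -> type := ltac:(getp (isTrivialGrp [set: {perm 'I_1}])).

Ltac memt := rewrite /= ?andbT; repeat (apply/andP; split);
  rewrite ?groupV; apply: memgs; by rewrite !inE ?eqxx ?orbT.

Section BoundsT.
Variable rT : finGroupType.
Implicit Type H : {group rT}.

Lemma bound_cyc n H : 0 < n -> hom H (p_cyc n) -> #|H| <= n.
Proof.
move=> n0 /homP[a [xs [sz /andP[/eqP <- hf]]]].
case: xs sz hf => [|//] _ /= /eqP an.
by rewrite /= -orderE order_le.
Qed.

Lemma bound_triv H : H \homg Grp p_triv -> #|H| <= 1.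
Proof.
move=> /homP[a [xs [sz /andP[/eqP <- hf]]]].
rewrite gen_ofE.
case: xs sz hf => [|//] _ /= /eqP a1.
by apply: card_gen1; rewrite ?expg1.
Qed.

Lemma bound_dih n H : 0 < n -> hom H (p_dih n) -> #|H| <= n * 2.
Proof.
move=> n0 /homP[a [xs [sz /andP[/eqP <- hf]]]].
rewrite gen_ofE.
case: xs sz hf => [|s [|//]] // _ hf; move: hf; rewrite [fholds _ _]/= => /and3P[/eqP an /eqP s2 /eqP as2].
have h1 : #|<<[set z in [:: a]]>>| <= n := card_gen1 n0 an.
apply: (step_bound (ys := [:: a])) => //.
by rewrite /= (dih_conj s2 as2); memt.
Qed.

Lemma bound_z3z3 H : H \homg Grp p_z3z3 -> #|H| <= 9.
Proof.
move=> /homP[a [xs [sz /andP[/eqP <- hf]]]].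
rewrite gen_ofE.
case: xs sz hf => [|b [|//]] // _ hf; move: hf; rewrite [fholds _ _]/= => /and3P[/eqP a3 /eqP b3 /eqP cab].
have h1 : #|<<[set z in [:: a]]>>| <= 3 := card_gen1 (n := 3) isT a3.
apply: (step_bound (ys := [:: a]) (m := 3) (n := 3)) => //.
by rewrite /= (comm_conj cab); memt.
Qed.

Lemma bound_d3z3 H : H \homg Grp p_d3z3 -> #|H| <= 18.
Proof.
move=> /homP[a [xs [sz /andP[/eqP <- hf]]]].
rewrite gen_ofE.
case: xs sz hf => [|s [|c [|//]]] // _ hf; move: hf; rewrite [fholds _ _]/= => /and3P[/eqP a3 /eqP s2 /and3P[/eqP as2 /eqP c3 /andP[/eqP cac /eqP csc]]].
have h1 : #|<<[set z in [:: a]]>>| <= 3 := card_gen1 (n := 3) isT a3.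
have h2 : #|<<[set z in [:: a; s]]>>| <= 3 * 2.
  apply: (step_bound (ys := [:: a])) => //.
  by rewrite /= (dih_conj s2 as2); memt.
apply: (step_bound (ys := [:: a; s]) (m := 6) (n := 3)) => //.
by rewrite /= (comm_conj cac) (comm_conj csc); memt.
Qed.

Lemma bound_sd2 H : H \homg Grp p_sd2 -> #|H| <= 18.
Proof.
move=> /homP[a [xs [sz /andP[/eqP <- hf]]]].
rewrite gen_ofE.
case: xs sz hf => [|b [|t [|//]]] // _ hf; move: hf; rewrite [fholds _ _]/= => /and3P[/eqP a3 /eqP b3 /and3P[/eqP cab /eqP t2 /andP[/eqP hat /eqP hbt]]].
have h1 : #|<<[set z in [:: a]]>>| <= 3 := card_gen1 (n := 3) isT a3.
have h2 : #|<<[set z in [:: a; b]]>>| <= 3 * 3.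
  apply: (step_bound (ys := [:: a])) => //.
  by rewrite /= (comm_conj cab); memt.
apply: (step_bound (ys := [:: a; b]) (m := 9) (n := 2)) => //.
by rewrite /= hat hbt; memt.
Qed.

Lemma bound_sd4 H : H \homg Grp p_sd4 -> #|H| <= 36.
Proof.
move=> /homP[a [xs [sz /andP[/eqP <- hf]]]].
rewrite gen_ofE.
case: xs sz hf => [|b [|t [|//]]] // _ hf; move: hf; rewrite [fholds _ _]/= => /and3P[/eqP a3 /eqP b3 /and3P[/eqP cab /eqP t4 /andP[/eqP hat /eqP hbt]]].
have h1 : #|<<[set z in [:: a]]>>| <= 3 := card_gen1 (n := 3) isT a3.
have h2 : #|<<[set z in [:: a; b]]>>| <= 3 * 3.
  apply: (step_bound (ys := [:: a])) => //.
  by rewrite /= (comm_conj cab); memt.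
apply: (step_bound (ys := [:: a; b]) (m := 9) (n := 4)) => //.
by rewrite /= hat hbt; memt.
Qed.

Lemma bound_d3d3 H : H \homg Grp p_d3d3 -> #|H| <= 36.
Proof.
move=> /homP[a [xs [sz /andP[/eqP <- hf]]]].
rewrite gen_ofE.
case: xs sz hf => [|s [|b [|u [|//]]]] // _ hf; move: hf; rewrite [fholds _ _]/=.
case/and3P=> /eqP a3 /eqP s2 /and3P[/eqP as2 /eqP b3 /and3P[/eqP u2 /eqP bu2 /and3P[/eqP cab /eqP cau /andP[/eqP csb /eqP csu]]]].
have h1 : #|<<[set z in [:: a]]>>| <= 3 := card_gen1 (n := 3) isT a3.
have h2 : #|<<[set z in [:: a; s]]>>| <= 3 * 2.
  apply: (step_bound (ys := [:: a])) => //.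
  by rewrite /= (dih_conj s2 as2); memt.
have h3 : #|<<[set z in [:: a; s; b]]>>| <= 6 * 3.
  apply: (step_bound (ys := [:: a; s])) => //.
  by rewrite /= (comm_conj cab) (comm_conj csb); memt.
apply: (step_bound (ys := [:: a; s; b]) (m := 18) (n := 2)) => //.
by rewrite /= (comm_conj cau) (comm_conj csu) (dih_conj u2 bu2); memt.
Qed.

Lemma bound_wr H : H \homg Grp p_wr -> #|H| <= 72.
Proof.
move=> /homP[a [xs [sz /andP[/eqP <- hf]]]].
rewrite gen_ofE.
case: xs sz hf => [|s [|b [|u [|t [|//]]]]] // _ hf; move: hf; rewrite [fholds _ _]/=.
case/and3P=> /eqP a3 /eqP s2 /and3P[/eqP as2 /eqP b3 /and3P[/eqP u2 /eqP bu2 /and3P[/eqP cab /eqP cau /and3P[/eqP csb /eqP csu /and3P[/eqP t2 /eqP hat /and3P[/eqP hst /eqP hbt /eqP hut]]]]]].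
have h1 : #|<<[set z in [:: a]]>>| <= 3 := card_gen1 (n := 3) isT a3.
have h2 : #|<<[set z in [:: a; s]]>>| <= 3 * 2.
  apply: (step_bound (ys := [:: a])) => //.
  by rewrite /= (dih_conj s2 as2); memt.
have h3 : #|<<[set z in [:: a; s; b]]>>| <= 6 * 3.
  apply: (step_bound (ys := [:: a; s])) => //.
  by rewrite /= (comm_conj cab) (comm_conj csb); memt.
have h4 : #|<<[set z in [:: a; s; b; u]]>>| <= 18 * 2.
  apply: (step_bound (ys := [:: a; s; b])) => //.
  by rewrite /= (comm_conj cau) (comm_conj csu) (dih_conj u2 bu2); memt.
apply: (step_bound (ys := [:: a; s; b; u]) (m := 36) (n := 2)) => //.
by rewrite /= hat hst hbt hut; memt.
Qed.

End BoundsT.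

Definition pres : seq (term -> type) := [:: p_wr; p_d3d3; p_sd4; p_sd2; p_d3z3; p_dih 6;
  p_z3z3; p_dih 4; p_dih 3; p_cyc 6; p_dih 2; p_cyc 4; p_cyc 3; p_cyc 2; p_triv].
Definition ordT : seq nat := [:: 72; 36; 36; 18; 18; 12; 9; 8; 6; 6; 4; 4; 3; 2; 1]%N.

Lemma boundT T (rT : finGroupType) (H : {group rT}) : T < 15 ->
  hom H (nth p_triv pres T) -> #|H| <= nth 0%N ordT T.
Proof.
do 15?[case: T => [|T]]; rewrite //= => _.
- exact: bound_wr.
- exact: bound_d3d3.
- exact: bound_sd4.
- exact: bound_sd2.
- exact: bound_d3z3.
- exact: bound_dih.
- exact: bound_z3z3.
- exact: bound_dih.
- exact: bound_dih.
- exact: bound_cyc.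
- exact: bound_dih.
- exact: bound_cyc.
- exact: bound_cyc.
- exact: bound_cyc.
- exact: bound_triv.
Qed.

Lemma listedE T (gT : finGroupType) (G : {set gT}) : T < 15 ->
  nth (@isTrivialGrp) listed_types T gT G = (iso G (nth p_triv pres T)).
Proof. by do 15?[case: T => [|T]]. Qed.

Local Open Scope group_scope.
Import Presentation.

Lemma eq_inord (x : 'I_6) k : k < 6 -> (x == inord k) = (val x == k).
Proof. by move=> hk; rewrite -(inj_eq val_inj) /= inordK. Qed.

Ltac permtac := apply/permP => -[[|[|[|[|[|[|//]]]]]] Hx];
  rewrite /elt plE; try (by vm_compute); apply/val_inj;
  rewrite /t12 /c123 /t45 /c456 /swap /v /= ?permM;
  repeat (rewrite permE /= ?eq_inord //=); rewrite ?inordK //.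

Lemma t12E : t12 = elt 1. Proof. permtac. Qed.
Lemma c123E : c123 = elt 2. Proof. permtac. Qed.
Lemma t45E : t45 = elt 3. Proof. permtac. Qed.
Lemma c456E : c456 = elt 4. Proof. permtac. Qed.
Lemma swapE : swap = elt 5. Proof. permtac. Qed.

Local Open Scope nat_scope.
Fixpoint iexp x n := match n with 0 => 0 | n'.+1 => tabf x (iexp x n') end.
Fixpoint ieval (e : seq nat) (t : term) : nat :=
  match t with
  | Cst i => nth 0 e i
  | Idx => 0
  | Inv t1 => itabf (ieval e t1)
  | Exp t1 n => iexp (ieval e t1) n
  | Mul t1 t2 => tabf (ieval e t1) (ieval e t2)
  | Conj t1 t2 => let y := ieval e t2 in tabf (itabf y) (tabf (ieval e t1) y)
  | Comm t1 t2 => let x := ieval e t1 in let y := ieval e t2 in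
                  tabf (itabf x) (tabf (itabf y) (tabf x y))
  end.
Fixpoint ifholds (e : seq nat) (f : formula) : bool :=
  match f with
  | Eq2 s t => ieval e s == ieval e t
  | And f1 f2 => ifholds e f1 && ifholds e f2
  end.

Definition step_vis (y : nat) (p : seq nat * seq bool) (g : nat) :=
  let z := tabf y g in
  if nth false p.2 z then p else (z :: p.1, set_nth false p.2 z true).
Fixpoint bfs (gens : seq nat) (fuel : nat) (todo : seq nat) (vis : seq bool) : seq bool :=
  match fuel with
  | 0 => vis
  | fuel'.+1 =>
    match todo with
    | [::] => vis
    | y :: todo' => let p := foldl (step_vis y) (todo', vis) gens in
                    bfs gens fuel' p.1 p.2
    end
  end.
Definition reach gens := bfs gens 80 [:: 0] (true :: nseq 71 false).
Definition closedb gens bs :=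
  all (fun i => nth false bs i ==> all (fun g => nth false bs (tabf i g)) gens) I72.

Definition esets := [seq (e, reach e.2) | e <- entries].
Definition sets := map snd esets.
Definition entry_ok (e : nat * seq nat) (s : seq bool) :=
  [&& e.1 < 15, e.2 != [::], all (fun g => g < 72) e.2,
      size (behead e.2) == ar (nth p_triv pres e.1),
      closedb e.2 s, nth false s 0, ifholds e.2 (bd (nth p_triv pres e.1)) &
      count (nth false s) I72 == nth 0 ordT e.1].
Definition ext_ok (e : nat * seq nat) (s : seq bool) :=
  all (fun i => nth false s i || (let T := reach (rcons e.2 i) in
        has (fun s' => s' == T) sets && all (nth false T) (rcons e.2 i))) I72.
Definition all_ok :=
  [&& all (fun p => entry_ok p.1 p.2 && ext_ok p.1 p.2) esets,
      all (fun T => has (fun e => e.1 == T) entries) (iota 0 15),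
      head (0, [::]) entries == (14, [:: 0]),
      all (nth false (reach [:: 1; 2; 3; 4; 5])) I72 &
      closedb [:: 1; 2; 3; 4; 5] (reach [:: 1; 2; 3; 4; 5])].
Lemma all_okP : all_ok.
Proof. by vm_compute. Qed.


Local Open Scope group_scope.
Import Presentation.

Arguments bfs : simpl never.
Arguments reach : simpl never.
Arguments closedb : simpl never.

Lemma iexp_ok x n : x < 72 -> iexp x n < 72 /\ elt (iexp x n) = elt x ^+ n.
Proof.
move=> hx; elim: n => [|n [h1 h2]] /=; first by rewrite elt1 expg0.
by rewrite tabf_lt // elt_mul // h2 expgS.
Qed.

Lemma ieval_ok e t : all (fun i => i < 72) e ->
  ieval e t < 72 /\ elt (ieval e t) = eval (map elt e) t.
Proof.
move=> /allP he; elim: t => /= [i | | t [h1 h2] | t [h1 h2] n | t1 [h1 h2] t2 [h3 h4]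
   | t1 [h1 h2] t2 [h3 h4] | t1 [h1 h2] t2 [h3 h4]].
- case: (ltnP i (size e)) => hi.
    by rewrite (nth_map 0) // he // mem_nth.
  by rewrite !nth_default ?size_map // elt1.
- by rewrite elt1.
- by rewrite itabf_lt // elt_inv // h2.
- by have [-> ->] := iexp_ok n h1; rewrite h2.
- by rewrite tabf_lt // elt_mul // h2 h4.
- by rewrite !tabf_lt ?itabf_lt // !elt_mul ?tabf_lt ?itabf_lt // elt_inv // h2 h4 conjgE.
- rewrite !tabf_lt ?itabf_lt //; split => //.
  by rewrite !elt_mul ?tabf_lt ?itabf_lt // !elt_inv // h2 h4 commgEl conjgE.
Qed.

Lemma ifholds_ok e f : all (fun i => i < 72) e -> ifholds e f -> fholds (map elt e) f.
Proof.
move=> he; elim: f => [s t | f1 IH1 f2 IH2] /=.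
  by move/eqP=> h; have [_ <-] := ieval_ok s he; have [_ <-] := ieval_ok t he; rewrite h.
by case/andP=> /IH1 -> /IH2 ->.
Qed.

Section Reach.
Variable X : {set {perm 'I_6}}.
Hypothesis gX : group_set X.
Let XG := Group gX.
Variable gens : seq nat.
Hypothesis hg : all (fun g => (g < 72) && (elt g \in X)) gens.
Let P i := (i < 72) && (elt i \in X).
Let Inv (todo : seq nat) (vis : seq bool) := all P todo /\ (forall i, nth false vis i -> P i).

Lemma step_inv y p g : P y -> g \in gens -> Inv p.1 p.2 -> Inv (step_vis y p g).1 (step_vis y p g).2.
Proof.
move=> /andP[hy ey] gg [h1 h2]; rewrite /step_vis.
have /andP[hgl eg] := allP hg g gg.
have Pz : P (tabf y g) by rewrite /P tabf_lt // elt_mul // (groupM (G := XG)).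
case: ifP => _ //=; split; first by rewrite /= Pz h1.
move=> i; rewrite nth_set_nth /=; case: eqP => [-> //|_]; exact: h2.
Qed.

Lemma fold_inv y gs p : P y -> {subset gs <= gens} -> Inv p.1 p.2 ->
  Inv (foldl (step_vis y) p gs).1 (foldl (step_vis y) p gs).2.
Proof.
elim: gs p => [|g gs IH] p //= Py sg hp.
apply: IH => //; first by move=> z zi; apply: sg; rewrite in_cons zi orbT.
by apply: step_inv => //; apply: sg; rewrite mem_head.
Qed.

Lemma bfs_inv fuel todo vis : Inv todo vis -> forall i, nth false (bfs gens fuel todo vis) i -> P i.
Proof.
elim: fuel todo vis => [|fuel IH] todo vis [h1 h2] //=.
case: todo h1 => [|y todo'] //= /andP[Py ht].
apply: IH; apply: fold_inv => //.
Qed.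

Lemma reach_sound i : nth false (reach gens) i -> (i < 72) && (elt i \in X).
Proof.
apply: bfs_inv; split; first by rewrite /= andbT /P elt1 (group1 XG).
case=> [|i']; first by rewrite /P elt1 (group1 XG).
by rewrite -[nth _ _ i'.+1]/(nth false (nseq 71 false) i') nth_nseq if_same.
Qed.
End Reach.

Definition sel (bs : seq bool) := [seq i <- I72 | nth false bs i].
Definition pset bs : {set {perm 'I_6}} := [set x in map elt (sel bs)].

Lemma mem_sel bs i : (i \in sel bs) = (i < 72) && nth false bs i.
Proof. by rewrite /sel mem_filter mem_iota add0n leq0n andbC. Qed.

Lemma psetP bs x :
  reflect (exists2 i, (i < 72) && nth false bs i & x = elt i) (x \in pset bs).
Proof.
rewrite inE; apply: (iffP mapP) => [[i]|[i]]; rewrite ?mem_sel => h ->;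
  by exists i; rewrite ?mem_sel.
Qed.

Lemma card_pset bs : #|pset bs| = count (nth false bs) I72.
Proof.
have u : uniq (map elt (sel bs)).
  rewrite (map_inj_in_uniq (f := elt)); first exact: (filter_uniq _ (iota_uniq 0 72)).
  move=> i j; rewrite !mem_sel => /andP[hi _] /andP[hj _]; exact: elt_inj.
have hs : size (map elt (sel bs)) = count (nth false bs) I72.
  by rewrite size_map; exact: size_filter.
rewrite /pset; move: (map elt (sel bs)) u hs => s u <-.
by rewrite cardsE; apply/card_uniqP.
Qed.

Lemma gen_sub_stable (gT : finGroupType) (S Y : {set gT}) : 1 \in S ->
  (forall y x, y \in Y -> x \in S -> x * y \in S) -> <<Y>> \subset S.
Proof.
move=> S1 hS.
pose A := [set y | [forall x in S, x * y \in S]].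
have gA : group_set A.
  apply/andP; split.
    by rewrite inE; apply/forall_inP => x xS; rewrite mulg1.
  apply/subsetP => z /mulsgP[y1 y2]; rewrite !inE => /forall_inP h1 /forall_inP h2 ->.
  by apply/forall_inP => x xS; rewrite mulgA h2 ?h1.
have sYA : <<Y>> \subset Group gA.
  rewrite gen_subG; apply/subsetP => y yY; rewrite inE; apply/forall_inP => x xS.
  exact: hS.
apply/subsetP => z /(subsetP sYA); rewrite inE => /forall_inP/(_ 1 S1).
by rewrite mul1g.
Qed.

Lemma pset_gen gens : all (fun g => g < 72) gens -> closedb gens (reach gens) ->
  nth false (reach gens) 0 -> <<[set z in map elt gens]>> = pset (reach gens).
Proof.
have RS := fun X gX hg => @reach_sound X gX gens hg.
move: (reach gens) RS => bs RS.
move=> /allP hg /allP hc h0; apply/eqP; rewrite eqEsubset; apply/andP; split.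
  apply: gen_sub_stable; first by apply/psetP; exists 0; rewrite ?h0 ?elt1.
  move=> y x; rewrite inE => /mapP[g gg ->] /psetP[i /andP[hi bi] ->].
  apply/psetP; exists (tabf i g); last by rewrite elt_mul // (hg g).
  rewrite tabf_lt ?(hg g) //=.
  by have := hc i; rewrite mem_iota hi /= bi /= => /(_ isT) /allP; apply.
apply/subsetP => x /psetP[i /andP[hi bi] ->].
have hX : all (fun g => (g < 72) && (elt g \in <<[set z in map elt gens]>>%G)) gens.
  by apply/allP => g gg; rewrite (hg g) //=; apply: mem_gen; rewrite inE; apply: map_f.
by case/andP: (RS _ (groupP _) hX i bi).
Qed.

Local Open Scope group_scope.
Import Presentation.

Arguments bfs : simpl never.
Arguments reach : simpl never.
Arguments closedb : simpl never.

Lemma In_nth (A : Type) (d : A) (s : seq A) P :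
  List.In P s -> exists2 T, T < size s & P = nth d s T.
Proof.
elim: s => [|a s IH] //= [->|/IH [T hT ->]]; first by exists 0.
by exists T.+1.
Qed.

Lemma nth_In (A : Type) (d : A) (s : seq A) T : T < size s -> List.In (nth d s T) s.
Proof. by elim: s T => [|a s IH] [|T] //= hT; [left | right; apply: IH]. Qed.

Lemma okE : all_ok. Proof. exact: all_okP. Qed.

Lemma esets_ok p : p \in esets -> [/\ p.2 = reach p.1.2, entry_ok p.1 p.2 & ext_ok p.1 p.2].
Proof.
move=> pe; have := okE; case/and5P => /allP hE _ _ _ _.
case/andP: (hE p pe) => h1 h2; split => //.
by case/mapP: pe => e _ ->.
Qed.

Lemma entry_gen p : p \in esets -> <<[set z in map elt p.1.2]>> = pset p.2.
Proof.
case/esets_ok => -> /and5P[_ _ hg _ /and4P[hc h0 _ _]] _.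
by apply: pset_gen.
Qed.

Lemma entry_iso p (H : {group {perm 'I_6}}) : p \in esets -> H :=: pset p.2 ->
  p.1.1 < 15 /\ iso H (nth p_triv pres p.1.1).
Proof.
move=> pe eH; have eg := entry_gen pe.
case/esets_ok: pe => e2 /and5P[hT hne hg hsz /and4P[hc h0 hf hcnt]] _.
split => //; apply: (iso_of_bound (N := nth 0%N ordT p.1.1)).
- case: p.1 hne hg hsz hf eg => T [|w0 ws] //= _ hg hsz hf eg.
  apply/homP; exists (elt w0), (map elt ws); split; first by rewrite size_map (eqP hsz).
  rewrite gen_ofE -/(map elt (w0 :: ws)) eg eH eqxx /=.
  have := ifholds_ok (e := w0 :: ws) (f := bd (nth p_triv pres T)) hg hf.
  by [].
- by rewrite eH card_pset (eqP hcnt).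
- by move=> rT K; apply: boundT.
Qed.


Definition Gall := reach [:: 1; 2; 3; 4; 5]%N.

Lemma AutE : AutK33 = pset Gall.
Proof.
have := okE; case/and5P => _ _ _ /allP hall hcl.
have h0 : nth false (reach [:: 1; 2; 3; 4; 5]%N) 0 by apply: hall.
have h72 : all (fun g => (g < 72)%N) [:: 1; 2; 3; 4; 5]%N by [].
rewrite /Gall -(pset_gen h72 hcl h0).
rewrite /AutK33 t12E c123E t45E c456E swapE; apply: (congr1 (fun A => <<A>>)).
by apply/setP => z; rewrite !inE !orbA.
Qed.

Lemma Gall_all i : (i < 72)%N -> elt i \in AutK33.
Proof.
move=> hi; have := okE; case/and5P => _ _ _ /allP hall _.
by rewrite AutE; apply/psetP; exists i => //; rewrite hi hall // mem_iota.
Qed.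

Lemma cover (H : {group {perm 'I_6}}) : H \subset AutK33 ->
  exists2 p, p \in esets & H :=: pset p.2.
Proof.
move=> sH.
have inG x : x \in H -> exists2 i, (i < 72)%N & x = elt i.
  move/(subsetP sH); rewrite AutE => /psetP[i /andP[hi _] ->]; by exists i.
suff: forall m p, p \in esets -> pset p.2 \subset H -> (#|H| - #|pset p.2| < m)%N ->
  exists2 p, p \in esets & H :=: pset p.2.
  have := okE; case/and5P => _ _ /eqP h0 _ _.
  have e0 : ((14%N, [:: 0%N]), reach [:: 0%N]) \in esets.
    rewrite /esets; case: entries h0 => [//|e es] /= ->; exact: mem_head.
  move/(_ #|H|.+1 _ e0); apply => //.
    rewrite -(entry_gen e0) gen_subG; apply/subsetP => z; rewrite inE /= inE => /eqP ->.
    by rewrite elt1 group1.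
  by rewrite ltnS leq_subr.
elim=> [|m IH] p pe sp hm; first by rewrite ltn0 in hm.
case: (boolP (H \subset pset p.2)) => sHp.
  exists p; first exact: pe.
  by apply/eqP; rewrite eqEsubset sHp sp.
case/subsetPn: sHp => x xH xnp.
have [i hi ex] := inG x xH.
case/esets_ok: (pe) => e2 /and5P[hT hne hg hsz /and4P[hc h0 hf hcnt]] /allP hext.
have := hext i; rewrite mem_iota hi => /(_ isT).
have nbi : nth false p.2 i = false.
  apply/negbTE; apply: contra xnp => bi; apply/psetP; exists i => //.
  by rewrite hi bi.
rewrite nbi orFb; cbv zeta.
have RS := fun X gX hg => @reach_sound X gX (rcons p.1.2 i) hg.
move: (reach (rcons p.1.2 i)) RS => T RS /andP[/hasP[s' s'in /eqP es'] /allP hbits].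
case/mapP: s'in => p' p'in es''.
have eT : p'.2 = T by rewrite -es'' es'.
have eg := entry_gen pe; have eg' := entry_gen p'in.
have hgl : {in p.1.2, forall g, (g < 72)%N} by apply/allP.
have sT : pset p'.2 \subset H.
  apply/subsetP => z /psetP[j /andP[hj bj] ->]; rewrite eT in bj.
  have hX : all (fun g => (g < 72)%N && (elt g \in H)) (rcons p.1.2 i).
    apply/allP => g; rewrite mem_rcons in_cons => /orP[/eqP -> | gp].
      by rewrite hi -ex xH.
    rewrite (hgl g gp) /=; apply: (subsetP sp); rewrite -eg; apply: mem_gen.
    by rewrite inE map_f.
  by case/andP: (RS _ (groupP H) hX j bj).
have spp : pset p.2 \proper pset p'.2.
  rewrite properE; apply/andP; split.
    have gp' : group_set (pset p'.2) by rewrite -eg' groupP.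
    have : <<[set z in map elt p.1.2]>> \subset Group gp'.
      rewrite gen_subG; apply/subsetP => z; rewrite inE => /mapP[g gp ->].
      apply/psetP; exists g => //; rewrite (hgl g gp) eT /=.
      by apply: hbits; rewrite mem_rcons in_cons gp orbT.
    by rewrite eg.
  apply/subsetPn; exists x => //; apply/psetP; exists i => //; rewrite hi eT /=.
  by apply: hbits; rewrite mem_rcons mem_head.
have c1 := proper_card spp; have c2 := subset_leq_card sT.
apply: (IH p' p'in sT).
have c3 : (#|pset p'.2| <= #|H|)%N := c2.
move: c1 c3 hm; generalize #|H| #|pset p.2| #|pset p'.2| m; clear; intros; lia.
Qed.

Lemma size_listed : size listed_types = 15%N. Proof. by []. Qed.

Theorem theorem3p1 :
  (forall H : {group {perm 'I_6}}, H \subset AutK33 ->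
     exists2 P, List.In P listed_types & P _ (H : {set _}))
  /\
  (forall P, List.In P listed_types ->
     exists2 H : {group {perm 'I_6}}, H \subset AutK33 & P _ (H : {set _})).
Proof.
split.
  move=> H sH; have [p pe eH] := cover sH.
  have [hT hiso] := entry_iso pe eH.
  exists (nth (@isTrivialGrp) listed_types p.1.1).
    by apply: nth_In; rewrite size_listed.
  rewrite listedE //; exact: hiso.
move=> P /(In_nth (@isTrivialGrp)) [T]; rewrite size_listed => hT ->.
have := okE; case/and5P => _ /allP hty _ _ _.
have := hty T; rewrite mem_iota hT => /(_ isT) /hasP[e ein /eqP eT].
have pe : (e, reach e.2) \in esets by apply: map_f.
have eg := entry_gen pe.
exists <<[set z in map elt e.2]>>%G.
  rewrite gen_subG; apply/subsetP => z; rewrite inE => /mapP[g gp ->].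
  case/esets_ok: pe => _ /and5P[_ _ /allP hg _ _] _.
  exact: Gall_all (hg g gp).
have [_ hiso] := entry_iso pe (H := <<[set z in map elt e.2]>>%G) eg.
rewrite listedE // -eT; exact: hiso.
Qed.
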